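(* Assume volume control with constants $\alpha,C_L,C_U$. Let $R\ge1$, let $\mathcal P$ be a covering of radius $R$ with overlap constant $b_\Gamma$, and let $\mathcal P'$ be a covering of radius $R'$ with $R'\le C_0R$ for some $C_0>0$. Let $u:A\to(0,\infty)$ be any positive function on a finite nonempty $A\subset\mathbb V$ (e.g. the landscape function). Then for every $E>0$, $$N_u^{\mathcal P,A}(E)\le(1+C_0)^\alpha C_\Gamma b_\Gamma\,N_u^{\mathcal P',A}(E),$$ where $C_\Gamma=2^\alpha C_U/C_L$.
   Context: $\Gamma=(\mathbb V,\mathcal E)$ is a connected simple unweighted graph with countably infinite vertex set, $d_0$ its shortest-path metric, $B(x,r)=\{y:d_0(x,y)\le r\}$. Volume control: $C_Lr^\alpha\le|B(x,r)|\le C_Ur^\alpha$ for all $x$, $r\ge1$, with $\alpha\ge1$. A covering of radius $R$ is a family $\mathcal P=\{B(z_i,R)\}_i$ with union $\mathbb V$; overlap constant $b$ means every point lies in at most $b$ of its balls. For finite $A$, $\mathcal P|_A=\{B\in\mathcal P:B\cap A\ne\emptyset\}$ and $N_u^{\mathcal P,A}(E)=|A|^{-1}\#\{B\in\mathcal P|_A:\min_{x\in B\cap A}1/u(x)\le E\}$. *)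

(* Defs.v *)
From Stdlib Require Import Reals Lra List.
Import ListNotations.
Open Scope R_scope.

Section Graph.
Context {V : Type} (adj : V -> V -> Prop).

Inductive walk : V -> V -> nat -> Prop :=
| walk0 x : walk x x 0
| walkS x y z n : adj x y -> walk y z n -> walk x z (S n).

(* B(x,r) = {y : d0(x,y) <= r}, d0 the shortest-path metric:
   d0(x,y) <= r  iff  some walk from x to y has length <= r. *)
Definition ball (x : V) (r : R) (y : V) : Prop :=
  exists n, walk x y n /\ INR n <= r.

Definition simple_graph : Prop :=
  (forall x y, adj x y -> adj y x) /\ (forall x, ~ adj x x).

Definition connected : Prop := forall x y, exists n, walk x y n.

End Graph.

Definition card_eq {T : Type} (S : T -> Prop) (n : nat) : Prop :=
  exists l : list T, NoDup l /\ (forall t, In t l <-> S t) /\ length l = n.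

Definition countably_infinite (T : Type) : Prop :=
  exists f : nat -> T, (forall m n, f m = f n -> m = n) /\ (forall t, exists n, f n = t).

Definition volume_control {V : Type} (adj : V -> V -> Prop) (alpha CL CU : R) : Prop :=
  forall (x : V) (r : R), 1 <= r ->
    exists n, card_eq (ball adj x r) n /\
      CL * Rpower r alpha <= INR n /\ INR n <= CU * Rpower r alpha.

Definition is_covering {V : Type} (adj : V -> V -> Prop)
    (P : (V -> Prop) -> Prop) (Rad : R) : Prop :=
  (forall B, P B -> exists z, forall y, B y <-> ball adj z Rad y) /\
  (forall x, exists B, P B /\ B x).

Definition overlap_const {V : Type} (P : (V -> Prop) -> Prop) (b : R) : Prop :=
  forall (x : V) (l : list (V -> Prop)), NoDup l ->
    (forall B, In B l -> P B /\ B x) -> INR (length l) <= b.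

Definition is_min {T : Type} (S : T -> Prop) (f : T -> R) (m : R) : Prop :=
  (exists x, S x /\ f x = m) /\ (forall x, S x -> m <= f x).

Definition counted_balls {V : Type} (P : (V -> Prop) -> Prop) (A : V -> Prop)
    (u : V -> R) (E : R) (B : V -> Prop) : Prop :=
  P B /\ (exists x, B x /\ A x) /\
  exists m, is_min (fun x => B x /\ A x) (fun x => / u x) m /\ m <= E.

Definition N_is {V : Type} (P : (V -> Prop) -> Prop) (A : V -> Prop)
    (u : V -> R) (E : R) (N : R) : Prop :=
  exists nA nP, card_eq A nA /\ card_eq (counted_balls P A u E) nP /\
    N = INR nP / INR nA.

(* Main.v *)
Require Import Defs.
From Stdlib Require Import Reals List.
From Stdlib Require Import Lra Lia ClassicalDescription Classical.
Open Scope R_scope.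

Definition dec (P : Prop) : bool := if excluded_middle_informative P then true else false.
Lemma decP (P : Prop) : dec P = true <-> P.
Proof. unfold dec; destruct (excluded_middle_informative P); split; intuition congruence. Qed.
Lemma decF (P : Prop) : dec P = false <-> ~ P.
Proof. unfold dec; destruct (excluded_middle_informative P); split; intuition congruence. Qed.

Definition cnt {T} (p : T -> bool) (l : list T) : nat := length (filter p l).

Lemma sum_split {T} (f g : T -> nat) (l : list T) :
  list_sum (map (fun y => (f y + g y)%nat) l) = (list_sum (map f l) + list_sum (map g l))%nat.
Proof. induction l; simpl; lia. Qed.

Lemma sum_ind {T} (p : T -> bool) (l : list T) :
  list_sum (map (fun y => if p y then 1%nat else 0%nat) l) = cnt p l.
Proof. induction l; unfold cnt in *; simpl; auto. destruct (p a); simpl; lia. Qed.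

Lemma double_count {X Y} (r : X -> Y -> bool) (L1 : list X) (L2 : list Y) :
  list_sum (map (fun x => cnt (r x) L2) L1) =
  list_sum (map (fun y => cnt (fun x => r x y) L1) L2).
Proof.
  induction L1 as [|a L1 IH]; simpl.
  - induction L2; simpl; auto.
  - rewrite IH.
    transitivity (list_sum (map (fun y => ((if r a y then 1 else 0) + cnt (fun x => r x y) L1)%nat) L2)).
    + rewrite sum_split, sum_ind; reflexivity.
    + f_equal; apply map_ext; intro y; unfold cnt; simpl; destruct (r a y); reflexivity.
Qed.

Lemma sum_lower {T} (f : T -> nat) (l : list T) (c : R) :
  (forall x, In x l -> c <= INR (f x)) -> INR (length l) * c <= INR (list_sum (map f l)).
Proof.
  induction l; intros H. simpl; lra.
  replace (list_sum (map f (a::l))) with (f a + list_sum (map f l))%nat by reflexivity.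
  replace (length (a::l)) with (S (length l)) by reflexivity.
  rewrite plus_INR, S_INR. assert (c <= INR (f a)) by (apply H; simpl; auto).
  assert (INR (length l) * c <= INR (list_sum (map f l))) by (apply IHl; intros; apply H; simpl; auto).
  lra.
Qed.

Lemma sum_upper {T} (f : T -> nat) (l : list T) (c : R) :
  (forall x, In x l -> INR (f x) <= c) -> INR (list_sum (map f l)) <= INR (length l) * c.
Proof.
  induction l; intros H. simpl; lra.
  replace (list_sum (map f (a::l))) with (f a + list_sum (map f l))%nat by reflexivity.
  replace (length (a::l)) with (S (length l)) by reflexivity.
  rewrite plus_INR, S_INR. assert (INR (f a) <= c) by (apply H; simpl; auto).
  assert (INR (list_sum (map f l)) <= INR (length l) * c) by (apply IHl; intros; apply H; simpl; auto).
  lra.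
Qed.

Lemma filter_len {T} (p : T -> bool) l :
  length l = (length (filter p l) + length (filter (fun x => negb (p x)) l))%nat.
Proof. induction l; simpl; auto. destruct (p a); simpl; lia. Qed.

Lemma cover_count {X} (l2 : list X) (rel : X -> X -> Prop) (M : R) : forall l1 : list X,
  NoDup l1 -> (forall a, In a l1 -> exists b, In b l2 /\ rel a b) ->
  (forall b, In b l2 -> forall L, NoDup L -> (forall a, In a L -> In a l1 /\ rel a b) -> INR (length L) <= M) ->
  INR (length l1) <= M * INR (length l2).
Proof.
  induction l2 as [|b t IH]; intros l1 Hnd Hrel Hb.
  - destruct l1 as [|a l1]. simpl; lra.
    destruct (Hrel a) as [b [[] _]]; simpl; auto.
  - rewrite (filter_len (fun a => dec (rel a b)) l1), plus_INR. simpl length; rewrite S_INR.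
    assert (H1 : INR (length (filter (fun a => dec (rel a b)) l1)) <= M).
    { apply (Hb b (or_introl eq_refl)). apply NoDup_filter; auto.
      intros a Ha. apply filter_In in Ha. destruct Ha as [Ha Hd]. apply (proj1 (decP _)) in Hd. tauto. }
    assert (H2 : INR (length (filter (fun a => negb (dec (rel a b))) l1)) <= M * INR (length t)).
    { apply IH. apply NoDup_filter; auto.
      - intros a Ha. apply filter_In in Ha. destruct Ha as [Ha Hd].
        destruct (dec (rel a b)) eqn:E; [discriminate|]. apply (proj1 (decF _)) in E.
        destruct (Hrel a Ha) as [b' [[<-|Hb'] Hr]]. contradiction. eauto.
      - intros b' Hb' L HL HLa. apply (Hb b' (or_intror Hb') L HL).
        intros a Ha. destruct (HLa a Ha) as [Ha1 Ha2]. apply filter_In in Ha1. tauto. }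
    lra.
Qed.

Lemma exists_min {T} (f : T -> R) (S : T -> Prop) (l : list T) :
  (exists x, In x l /\ S x) -> exists x, In x l /\ S x /\ forall y, In y l -> S y -> f x <= f y.
Proof.
  induction l as [|a t IH]; intros [x [Hx HS]]. destruct Hx.
  destruct (classic (exists x, In x t /\ S x)) as [Ht|Ht].
  - destruct (IH Ht) as [m [Hm [HSm Hmin]]].
    destruct (classic (S a /\ f a <= f m)) as [Ha|Ha].
    + exists a. split; [left; auto|split; [tauto|]]. intros y [<-|Hy] Hy'. lra.
      specialize (Hmin y Hy Hy'); lra.
    + exists m. split; [right; auto|split; auto]. intros y [<-|Hy] Hy'; [|auto].
      destruct (Rle_dec (f m) (f a)); auto. exfalso; apply Ha; split; auto; lra.
  - exists a. destruct Hx as [<-|Hx]. 2:{ exfalso; eauto. }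
    split; [left; auto|split; auto]. intros y [<-|Hy] Hy'. lra. exfalso; eauto.
Qed.

Section W.
Context {V : Type} (adj : V -> V -> Prop).
Lemma walk_app x y z n m : walk adj x y n -> walk adj y z m -> walk adj x z (n + m).
Proof. induction 1; intros; simpl; auto. econstructor; eauto. Qed.
Lemma walk_rev (Hs : forall x y, adj x y -> adj y x) x y n : walk adj x y n -> walk adj y x n.
Proof.
  induction 1. constructor.
  replace (S n) with (n + 1)%nat by lia. eapply walk_app; eauto.
  econstructor; [apply Hs; eauto| constructor].
Qed.
Lemma ball_trans x y z r s : ball adj x r y -> ball adj y s z -> ball adj x (r + s) z.
Proof.
  intros [n [Hn Hr]] [m [Hm Hs]]. exists (n + m)%nat; split. eapply walk_app; eauto.
  rewrite plus_INR; lra.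
Qed.
Lemma ball_sym (Hs : forall x y, adj x y -> adj y x) x y r : ball adj x r y -> ball adj y r x.
Proof. intros [n [Hn Hr]]; exists n; split; auto. apply walk_rev; auto. Qed.
End W.

Lemma ball_mono {V} (adj : V -> V -> Prop) x y r s : ball adj x r y -> r <= s -> ball adj x s y.
Proof. intros [n [Hn Hr]] H; exists n; split; auto; lra. Qed.

Lemma card_unique {T} (S : T -> Prop) n m : card_eq S n -> card_eq S m -> n = m.
Proof.
  intros [l1 [H1 [I1 L1]]] [l2 [H2 [I2 L2]]]; subst.
  apply Nat.le_antisymm; apply NoDup_incl_length; auto; intros t Ht.
  apply I2, I1, Ht. apply I1, I2, Ht.
Qed.

Lemma Rpower_pos x y : 0 < Rpower x y.
Proof. unfold Rpower; apply exp_pos. Qed.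

Theorem lemma2p3 (V : Type) (adj : V -> V -> Prop)
  (alpha CL CU : R)
  (Hinf : countably_infinite V) (Hsimple : simple_graph adj) (Hconn : connected adj)
  (Halpha : 1 <= alpha) (HCL : 0 < CL) (HCU : 0 < CU)
  (Hvol : volume_control adj alpha CL CU)
  (Rad Rad' C0 b : R) (P P' : (V -> Prop) -> Prop)
  (HR : 1 <= Rad) (HP : is_covering adj P Rad) (Hb : overlap_const P b)
  (HC0 : 0 < C0) (HP' : is_covering adj P' Rad') (HR' : Rad' <= C0 * Rad)
  (A : V -> Prop) (nA : nat) (HA : card_eq A nA) (HAne : (0 < nA)%nat)
  (u : V -> R) (Hu : forall x, A x -> 0 < u x)
  (E : R) (HE : 0 < E) (N N' : R)
  (HN : N_is P A u E N) (HN' : N_is P' A u E N') :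
  N <= Rpower (1 + C0) alpha * (Rpower 2 alpha * CU / CL) * b * N'.
Proof.
  destruct HN as [nA1 [nP [HA1 [HcP ->]]]].
  destruct HN' as [nA2 [nP' [HA2 [HcP' ->]]]].
  rewrite <- (card_unique _ _ _ HA HA1), <- (card_unique _ _ _ HA HA2).
  destruct Hinf as [f _].
  assert (Hb0 : 0 <= b).
  { replace 0 with (INR (length (@nil (V -> Prop)))) by reflexivity.
    apply (Hb (f 0%nat)). constructor. intros B []. }
  assert (HR'0 : 0 <= Rad').
  { destruct (proj2 HP' (f 0%nat)) as [B [PB Bx]].
    destruct (proj1 HP' B PB) as [z Hz]. apply Hz in Bx.
    destruct Bx as [n [_ Hn]]. pose proof (pos_INR n); lra. }
  destruct Hsimple as [Hsym _].
  destruct HA as [lA [HndA [HinA HlenA]]].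
  destruct HcP as [lP [HndP [HinP HlenP]]].
  destruct HcP' as [lP' [HndP' [HinP' HlenP']]].
  set (r := 2 * Rad + Rad').
  set (a1 := Rpower r alpha). set (a4 := Rpower Rad alpha).
  set (M := b * (CU * a1) / (CL * a4)).
  assert (Ha4 : 0 < a4) by apply Rpower_pos.
  assert (Key : INR nP <= M * INR nP').
  { rewrite <- HlenP, <- HlenP'.
    apply (cover_count lP' (fun B B' => exists x, B x /\ B' x) M lP HndP).
    - intros a Ha. apply HinP in Ha.
      destruct Ha as [Pa [_ [m [[[x [[Bx Ax] Hxm]] _] Hm]]]].
      destruct (proj2 HP' x) as [B' [PB' B'x]].
      exists B'. split; [|exists x; auto].
      apply HinP'. split; [auto|split; [exists x; auto|]].
      destruct (exists_min (fun x => / u x) (fun x => B' x /\ A x) lA) as [m0 [Hm0 [HSm0 Hmin]]].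
      { exists x; split; [apply HinA; auto|auto]. }
      exists (/ u m0). split.
      + split; [exists m0; auto|]. intros y Hy. apply Hmin; auto. apply HinA; tauto.
      + assert (/ u m0 <= / u x) by (apply Hmin; auto; apply HinA; auto). lra.
    - intros B' HB' L HndL HL.
      apply HinP' in HB'. destruct HB' as [PB' _].
      destruct (proj1 HP' B' PB') as [z' Hz'].
      assert (Hr1 : 1 <= r) by (unfold r; lra).
      destruct (Hvol z' r Hr1) as [nb [[lB [HndB [HinB HlenB]]] [_ Hnb]]].
      set (S := list_sum (map (fun B => cnt (fun y => dec (B y)) lB) L)).
      assert (Hlow : INR (length L) * (CL * a4) <= INR S).
      { apply sum_lower. intros B HBL. destruct (HL B HBL) as [HBP [x [Bx B'x]]].
        apply HinP in HBP. destruct HBP as [PB _].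
        destruct (proj1 HP B PB) as [z Hz].
        destruct (Hvol z Rad HR) as [nz [[lz [Hndz [Hinz Hlenz]]] [Hnz _]]].
        apply Rle_trans with (INR nz); [exact Hnz|]. apply le_INR. rewrite <- Hlenz.
        apply NoDup_incl_length; auto. intros t Ht. apply filter_In.
        apply Hinz in Ht. split; [|apply decP; apply Hz; auto].
        apply HinB. apply ball_mono with (Rad' + Rad + Rad); [|unfold r; lra].
        apply ball_trans with z; [apply ball_trans with x|auto].
        apply Hz'; auto. apply ball_sym; auto. apply Hz; auto. }
      assert (Hup : INR S <= INR (length lB) * b).
      { unfold S. rewrite double_count. apply sum_upper. intros y Hy.
        apply (Hb y). apply NoDup_filter; auto.
        intros B HB. apply filter_In in HB. destruct HB as [HBL Hd].
        apply (proj1 (decP _)) in Hd. split; auto.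
        destruct (HL B HBL) as [HBP _]. apply HinP in HBP. exact (proj1 HBP). }
      rewrite HlenB in Hup.
      assert (Hx : INR nb * b <= CU * a1 * b) by (apply Rmult_le_compat_r; auto).
      apply (Rmult_le_reg_r (CL * a4)). apply Rmult_lt_0_compat; auto.
      replace (M * (CL * a4)) with (CU * a1 * b) by (unfold M; field; lra).
      lra. }
  set (a2 := Rpower 2 alpha). set (a3 := Rpower (1 + C0) alpha).
  assert (Ha1 : a1 <= a2 * a3 * a4).
  { unfold a1, a2, a3, a4. rewrite !Rpower_mult_distr; try lra.
    apply Rle_Rpower_l; [lra|]. unfold r; split; nra. }
  assert (HM : M <= a3 * (a2 * CU / CL) * b).
  { apply (Rmult_le_reg_r (CL * a4)). apply Rmult_lt_0_compat; auto.
    replace (M * (CL * a4)) with (b * CU * a1) by (unfold M; field; lra).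
    replace (a3 * (a2 * CU / CL) * b * (CL * a4)) with (b * CU * (a2 * a3 * a4)) by (field; lra).
    apply Rmult_le_compat_l; auto. apply Rmult_le_pos; lra. }
  assert (HnA : 0 < INR nA) by (apply lt_0_INR; lia).
  unfold Rdiv.
  replace (a3 * (a2 * CU * / CL) * b * (INR nP' * / INR nA))
    with ((a3 * (a2 * CU * / CL) * b * INR nP') * / INR nA) by ring.
  apply Rmult_le_compat_r. left; apply Rinv_0_lt_compat; auto.
  apply Rle_trans with (M * INR nP'); auto.
  apply Rmult_le_compat_r; [apply pos_INR|]. unfold Rdiv in HM; auto.
Qed.
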